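(* Let $\mathcal F=\{F^c_{t,k}\}$ be an F-system and $R,\lambda$ reals such that $|F^A_t\cup F^B_t|\le Rt+\lambda$ for every positive integer $t$. Then for every positive integer $t$, $|S_{2t,t}|\ge(6-4R)t-2\lambda$.
   Context: F-system: a family $\mathcal F=\{F^c_{t,k}\}$ of sets of positive integers, indexed by $c\in\{A,B\}$ and integers $0<k\le t$, such that (F1) $|F^c_{t,k}|\ge k$ for all $c,t,k$; and (F2) $F^A_{t,k}\cap F^B_{t',k'}=\emptyset$ for all $k\le t$, $k'\le t'$ with $k+k'\le\max(t,t')$. Notation: $F^c_t=\bigcup_{0<\kappa\le\tau\le t}F^c_{\tau,\kappa}$ for $c\in\{A,B\}$; $S_t=F^A_t\cap F^B_t$; $S_{2t,t}=S_{2t}\cap(F^A_{2t,t}\cup F^B_{2t,t})$. *)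

(* Defs.v *)
From Stdlib Require Import Reals Lra Lia Arith List.
Open Scope R_scope.

Inductive color := cA | cB.

(* A Ffamily F c t k, read as the set F^c_{t,k} (x belongs iff F c t k x).
   Only indices with 0 < k <= t are meaningful. *)
Definition Ffamily := color -> nat -> nat -> nat -> Prop.

Definition card_ge (P : nat -> Prop) (n : nat) : Prop :=
  exists l : list nat, NoDup l /\ (n <= length l)%nat /\ (forall x, In x l -> P x).

(* |P| <= r (r real): every finite list of distinct elements of P has length <= r
   (in particular P is finite). *)
Definition card_le_R (P : nat -> Prop) (r : R) : Prop :=
  forall l : list nat, NoDup l -> (forall x, In x l -> P x) -> INR (length l) <= r.

Definition card_ge_R (P : nat -> Prop) (r : R) : Prop :=
  exists l : list nat, NoDup l /\ (forall x, In x l -> P x) /\ r <= INR (length l).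

Definition F_system (F : Ffamily) : Prop :=
  (forall c t k x, (0 < k <= t)%nat -> F c t k x -> (0 < x)%nat) /\
  (forall c t k, (0 < k <= t)%nat -> card_ge (F c t k) k) /\
  (forall t k t' k', (0 < k <= t)%nat -> (0 < k' <= t')%nat ->
     (k + k' <= Nat.max t t')%nat ->
     forall x, F cA t k x -> F cB t' k' x -> False).

Definition Fc (F : Ffamily) (c : color) (t : nat) (x : nat) : Prop :=
  exists tau kappa, (0 < kappa <= tau)%nat /\ (tau <= t)%nat /\ F c tau kappa x.

Definition S (F : Ffamily) (t : nat) (x : nat) : Prop :=
  Fc F cA t x /\ Fc F cB t x.

Definition S2 (F : Ffamily) (t : nat) (x : nat) : Prop :=
  S F (2 * t) x /\ (F cA (2 * t)%nat t x \/ F cB (2 * t)%nat t x).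

(* Main.v *)
Require Import Defs.
From Stdlib Require Import Reals Lra Lia Arith List.
Open Scope R_scope.

Definition memn (l : list nat) (x : nat) : nat :=
  if in_dec Nat.eq_dec x l then 1%nat else 0%nat.
Definition memb (l : list nat) (x : nat) : bool :=
  if in_dec Nat.eq_dec x l then true else false.
Definition sumL (g : nat -> nat) (L : list nat) : nat :=
  fold_right (fun x a => (g x + a)%nat) 0%nat L.

Lemma filter_len (l L : list nat) : NoDup l -> incl l L ->
  (length l <= length (filter (memb l) L))%nat.
Proof.
  intros H1 H2. apply NoDup_incl_length; auto.
  intros x Hx. apply filter_In. split; auto.
  unfold memb. destruct (in_dec Nat.eq_dec x l); tauto.
Qed.

Lemma sum_filter (l L : list nat) : length (filter (memb l) L) = sumL (memn l) L.
Proof.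
  induction L as [|a L IH]; simpl; auto.
  unfold memn at 1. unfold memb at 1. destruct (in_dec Nat.eq_dec a l); simpl; rewrite IH; lia.
Qed.

Lemma sumL_plus g h L : sumL (fun x => (g x + h x)%nat) L = (sumL g L + sumL h L)%nat.
Proof. induction L; simpl; lia. Qed.

Lemma sum_bound g L : (forall x, In x L -> (g x <= 3)%nat) ->
  (sumL g L <= 2 * length L + length (filter (fun x => Nat.leb 3 (g x)) L))%nat.
Proof.
  induction L as [|a L IH]; intros H; [simpl; auto|].
  assert (Ha := H a (or_introl eq_refl)).
  assert (IH' := IH (fun x Hx => H x (or_intror Hx))).
  unfold sumL in *. cbn [fold_right filter].
  destruct (Nat.leb 3 (g a)) eqn:E; cbn [length];
    [apply Nat.leb_le in E | apply Nat.leb_nle in E]; lia.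
Qed.

Lemma memn_in l x : (0 < memn l x)%nat -> In x l.
Proof. unfold memn; destruct (in_dec Nat.eq_dec x l); auto; lia. Qed.

Lemma memn_le l x : (memn l x <= 1)%nat.
Proof. unfold memn; destruct (in_dec Nat.eq_dec x l); lia. Qed.

Theorem lemma3 (F : Ffamily) (r lam : R) :
  F_system F ->
  (forall t : nat, (0 < t)%nat ->
     card_le_R (fun x => Fc F cA t x \/ Fc F cB t x) (r * INR t + lam)) ->
  forall t : nat, (0 < t)%nat ->
    card_ge_R (S2 F t) ((6 - 4 * r) * INR t - 2 * lam).
Proof.
  intros [Hpos [HF1 HF2]] HU t Ht.
  destruct (HF1 cA (2*t)%nat t ltac:(lia)) as [l1 [N1 [L1 I1]]].
  destruct (HF1 cB (2*t)%nat t ltac:(lia)) as [l2 [N2 [L2 I2]]].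
  destruct (HF1 cA (2*t)%nat (2*t)%nat ltac:(lia)) as [l3 [N3 [L3 I3]]].
  destruct (HF1 cB (2*t)%nat (2*t)%nat ltac:(lia)) as [l4 [N4 [L4 I4]]].
  set (L := nodup Nat.eq_dec (l1 ++ l2 ++ l3 ++ l4)).
  assert (NL : NoDup L) by apply NoDup_nodup.
  assert (InL : forall x, In x L <-> In x (l1 ++ l2 ++ l3 ++ l4)) by (intro; apply nodup_In).
  set (g := fun x => (memn l1 x + memn l2 x + (memn l3 x + memn l4 x))%nat).
  set (M := filter (fun x => Nat.leb 3 (g x)) L).
  assert (E1 := filter_len l1 L N1 ltac:(intros x Hx; apply InL; apply in_or_app; auto)).
  assert (E2 := filter_len l2 L N2 ltac:(intros x Hx; apply InL; apply in_or_app; right; apply in_or_app; auto)).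
  assert (E3 := filter_len l3 L N3 ltac:(intros x Hx; apply InL; apply in_or_app; right; apply in_or_app; right; apply in_or_app; auto)).
  assert (E4 := filter_len l4 L N4 ltac:(intros x Hx; apply InL; apply in_or_app; right; apply in_or_app; right; apply in_or_app; auto)).
  rewrite sum_filter in E1, E2, E3, E4.
  assert (Hg : forall x, In x L -> (g x <= 3)%nat).
  { intros x _. unfold g.
    assert (memn l1 x = 0%nat \/ memn l2 x = 0%nat).
    { destruct (Nat.eq_dec (memn l1 x) 0); auto.
      destruct (Nat.eq_dec (memn l2 x) 0); auto.
      exfalso. apply (HF2 (2*t)%nat t (2*t)%nat t ltac:(lia) ltac:(lia) ltac:(lia) x).
      - apply I1, memn_in; lia.
      - apply I2, memn_in; lia. }
    pose proof (memn_le l1 x); pose proof (memn_le l2 x);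
    pose proof (memn_le l3 x); pose proof (memn_le l4 x); lia. }
  assert (B := sum_bound g L Hg).
  unfold g in B. rewrite !sumL_plus in B.
  assert (Hcnt : (6 * t <= 2 * length L + length M)%nat) by (unfold M, g; lia).
  assert (HLe : INR (length L) <= r * INR (2 * t) + lam).
  { apply HU; [lia | exact NL |].
    intros x Hx. apply InL in Hx.
    repeat (apply in_app_or in Hx; destruct Hx as [Hx|Hx]).
    - left. exists (2*t)%nat, t. split; [lia|]. split; [lia|]. auto.
    - right. exists (2*t)%nat, t. split; [lia|]. split; [lia|]. auto.
    - left. exists (2*t)%nat, (2*t)%nat. split; [lia|]. split; [lia|]. auto.
    - right. exists (2*t)%nat, (2*t)%nat. split; [lia|]. split; [lia|]. auto. }
  exists M. split; [apply NoDup_filter; exact NL|]. split.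
  - intros x Hx. unfold M in Hx. apply filter_In in Hx. destruct Hx as [_ Hx].
    apply Nat.leb_le in Hx. unfold g in Hx.
    pose proof (memn_le l1 x); pose proof (memn_le l2 x);
    pose proof (memn_le l3 x); pose proof (memn_le l4 x).
    assert (A : In x l1 \/ In x l3).
    { destruct (Nat.eq_dec (memn l1 x) 0); [right; apply memn_in; lia | left; apply memn_in; lia]. }
    assert (Bb : In x l2 \/ In x l4).
    { destruct (Nat.eq_dec (memn l2 x) 0); [right; apply memn_in; lia | left; apply memn_in; lia]. }
    assert (C : In x l1 \/ In x l2).
    { destruct (Nat.eq_dec (memn l1 x) 0); [right; apply memn_in; lia | left; apply memn_in; lia]. }
    split; [split|].
    + destruct A as [A0|A0]; [exists (2*t)%nat, t | exists (2*t)%nat, (2*t)%nat];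
        (split; [lia|]); (split; [lia|]); auto.
    + destruct Bb as [A0|A0]; [exists (2*t)%nat, t | exists (2*t)%nat, (2*t)%nat];
        (split; [lia|]); (split; [lia|]); auto.
    + destruct C; [left; auto | right; auto].
  - apply le_INR in Hcnt. rewrite mult_INR, plus_INR, mult_INR in Hcnt.
    rewrite mult_INR in HLe. simpl in Hcnt, HLe. lra.
Qed.
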